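(* In the setting described in the context, for every $x\in X$ it holds that $|\pi^{-1}(\{\pi(x)\})|\leq m^{2^r}$.
   Context: Let $r\geq 2$, $G=\mathbb Z^r$ with standard basis $e_1,\dots,e_r$. For each $j$, let $(p_j^i)_{i\in\mathbb N}$ be a strictly increasing sequence of positive integers with $p_j^i\mid p_j^{i+1}$ and $p_j^i>2i+1$, and let $\Gamma_i=\langle p_j^ie_j:1\leq j\leq r\rangle$, assumed to satisfy $[\Gamma_i:\Gamma_{i+1}]>1/(1-2^{-(1/2)^{i+1}})$. Let $(D_i)_{i\in\mathbb N}$ be finite subsets of $\mathbb Z^r$ such that: each $D_i$ is a fundamental domain of $\mathbb Z^r/\Gamma_i$ of the form $\{(x_1,\dots,x_r): -q^i_{1,j}\leq x_j<q^i_{2,j},\ 1\le j\le r\}$ with integers $q^i_{1,j},q^i_{2,j}>i$, $q^i_{1,j}+q^i_{2,j}=p^i_j$; $0\in D_i\subseteq D_{i+1}$; $\bigcup_iD_i=\mathbb Z^r$; and $D_i=\bigcup_{\gamma\in D_i\cap\Gamma_{i-1}}(\gamma+D_{i-1})$ for $i\geq2$. Let $m\geq 2$, $\Sigma=\{1,\dots,m\}$, and $\alpha_i\in\Sigma$ the element with $\alpha_i\equiv i\pmod m$. Define $\eta\in\Sigma^{\mathbb Z^r}$: $J(0)=\{0\}$ and $\eta(\gamma)=\alpha_1$ for $\gamma\in\Gamma_1$; for $k\geq1$, $J(k)=D_k\setminus\bigcup_{i=0}^{k-1}(J(i)+\Gamma_{i+1})$ and $\eta(\gamma+h)=\alpha_{k+1}$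 for $h\in J(k)$, $\gamma\in\Gamma_{k+1}$. With the shift $\sigma^g(x)(h)=x(h-g)$, let $X$ be the closure of the $\sigma$-orbit of $\eta$. For $y\in\Sigma^{\mathbb Z^r}$, a subgroup $\Gamma$ and $\alpha\in\Sigma$, let $\mathrm{Per}(y,\Gamma,\alpha)=\{g: y(g-\gamma)=\alpha\ \forall\gamma\in\Gamma\}$, and $C_i=\{y\in X:\mathrm{Per}(y,\Gamma_i,\alpha)=\mathrm{Per}(\eta,\Gamma_i,\alpha)\ \forall\alpha\in\Sigma\}$. The odometer is $\overleftarrow{G}=\{(t_i+\Gamma_i)_i\in\prod_i\mathbb Z^r/\Gamma_i: t_{i+1}+\Gamma_i=t_i+\Gamma_i\}$, and $\pi:X\to\overleftarrow G$ is the factor map (onto the maximal equicontinuous factor) given by $\pi(x)=(t_i+\Gamma_i)_i$ where $\sigma^{t_i}x\in C_i$ for each $i$. *)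

(* Defs.v *)
From Stdlib Require Import Reals ClassicalEpsilon.
From mathcomp Require Import all_boot all_order all_algebra.

Set Implicit Arguments.
Unset Strict Implicit.
Unset Printing Implicit Defensive.

Import GRing.Theory Num.Theory.

(* Z^r, with coordinates indexed by 'I_r (j = 1..r in the paper is j = 0..r-1). *)
Definition Zr (r : nat) := 'I_r -> int.
Definition zsub r (g h : Zr r) : Zr r := fun j => (g j - h j)%R.
Definition zero (r : nat) : Zr r := fun _ => 0%R.
Arguments zero : clear implicits.

(* Configurations Sigma^{Z^r}; Sigma = {1,...,m} realised inside nat. *)
Definition Config r := Zr r -> nat.

(* alpha_i : the element of {1..m} congruent to i mod m (used for i >= 1) *)
Definition alpha (m i : nat) : nat := ((i.-1) %% m).+1.

(* Gamma_i = < p_j^i e_j : j >   (p i j = p_j^i) *)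
Definition inGamma r (p : nat -> 'I_r -> nat) (i : nat) (g : Zr r) : Prop :=
  forall j, ((p i j)%:Z %| g j)%Z.

Definition inD r (q1 q2 : nat -> 'I_r -> nat) (i : nat) (g : Zr r) : Prop :=
  forall j, (- (q1 i j)%:Z <= g j)%R /\ (g j < (q2 i j)%:Z)%R.

(* (J(k), U_{i<k} (J(i) + Gamma_{i+1})) computed together by recursion on k *)
Fixpoint Jcov r (p q1 q2 : nat -> 'I_r -> nat) (k : nat)
  : (Zr r -> Prop) * (Zr r -> Prop) :=
  match k with
  | 0 => (fun h => forall j, h j = 0%R, fun _ => False)
  | k'.+1 =>
      let JC := Jcov p q1 q2 k' in
      let c' := fun h => JC.2 h \/ exists h', JC.1 h' /\ inGamma p k'.+1 (zsub h h') in
      (fun h => inD q1 q2 k'.+1 h /\ ~ c' h, c')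
  end.

Definition J r (p q1 q2 : nat -> 'I_r -> nat) (k : nat) : Zr r -> Prop :=
  (Jcov p q1 q2 k).1.

(* eta(gamma + h) = alpha_{k+1} for h in J(k), gamma in Gamma_{k+1} (k >= 0) *)
Definition eta r (m : nat) (p q1 q2 : nat -> 'I_r -> nat) : Config r :=
  fun g => alpha m (epsilon (inhabits 0%N)
              (fun k => exists h, J p q1 q2 k h /\ inGamma p k.+1 (zsub g h))).+1.

Definition shift r (g : Zr r) (x : Config r) : Config r := fun h => x (zsub h g).

(* X = closure of the shift orbit of eta in the product (discrete) topology:
   every finite window of x is seen in some shift of eta. *)
Definition inX r m (p q1 q2 : nat -> 'I_r -> nat) (x : Config r) : Prop :=
  forall n : nat, exists g : Zr r, forall h : Zr r,
    (forall j, (`|h j| <= n%:Z)%R) -> x h = shift g (eta m p q1 q2) h.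

Definition Per r (p : nat -> 'I_r -> nat) (y : Config r) (i : nat) (a : nat) (g : Zr r)
  : Prop := forall gam, inGamma p i gam -> y (zsub g gam) = a.

Definition inC r m (p q1 q2 : nat -> 'I_r -> nat) (i : nat) (y : Config r) : Prop :=
  inX m p q1 q2 y /\
  forall a, (1 <= a <= m)%N -> forall g,
      Per p y i a g <-> Per p (eta m p q1 q2) i a g.

(* pi(x)_i = t_i + Gamma_i with sigma^{t_i} x in C_i; the coset t + Gamma_i is
   represented canonically by its reduction (t_j mod p_j^i)_j. *)
Definition piX r m (p q1 q2 : nat -> 'I_r -> nat) (x : Config r) (i : nat) : Zr r :=
  let t := epsilon (inhabits (zero r)) (fun t => inC m p q1 q2 i (shift t x)) in
  fun j => (t j %% (p i j)%:Z)%Z.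

(* [Gamma_i : Gamma_{i+1}] > 1 / (1 - 2^{-(1/2)^{i+1}}) ;
   the index is |Z^r/Gamma_{i+1}| / |Z^r/Gamma_i|. *)
Definition index_cond r (p : nat -> 'I_r -> nat) (i : nat) : Prop :=
  Rlt (Rdiv R1 (Rminus R1 (Rpower (Rplus R1 R1)
                                  (Ropp (pow (Rinv (Rplus R1 R1)) i.+1)))))
      (Rdiv (INR (\prod_(j < r) p i.+1 j)%N) (INR (\prod_(j < r) p i j)%N)).

(* Main.v *)
Require Import Defs.
From Stdlib Require Import Reals ClassicalEpsilon.
From mathcomp Require Import all_boot all_order all_algebra.
From mathcomp Require Import zify.
From Stdlib Require Import FunctionalExtensionality Classical.
Import GRing.Theory Num.Theory.

Set Implicit Arguments.
Unset Strict Implicit.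
Unset Printing Implicit Defensive.

Definition zadd r (g h : Zr r) : Zr r := fun j => (g j + h j)%R.
Definition zopp r (g : Zr r) : Zr r := fun j => (- g j)%R.
Definition Sk r (p q1 q2 : nat -> 'I_r -> nat) k : Zr r -> Prop := (Jcov p q1 q2 k).2.
Definition JG r (p q1 q2 : nat -> 'I_r -> nat) k (g : Zr r) : Prop :=
  exists h, J p q1 q2 k h /\ inGamma p k.+1 (zsub g h).

Lemma S_succ r (p q1 q2 : nat -> 'I_r -> nat) k g :
  Sk p q1 q2 k.+1 g <-> Sk p q1 q2 k g \/ JG p q1 q2 k g.
Proof. by []. Qed.

Lemma J_succ r (p q1 q2 : nat -> 'I_r -> nat) k h :
  J p q1 q2 k.+1 h <-> inD q1 q2 k.+1 h /\ ~ Sk p q1 q2 k.+1 h.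
Proof. by []. Qed.

Lemma J0 r (p q1 q2 : nat -> 'I_r -> nat) h : J p q1 q2 0 h <-> forall j, h j = 0%R.
Proof. by []. Qed.

Lemma S0 r (p q1 q2 : nat -> 'I_r -> nat) g : ~ Sk p q1 q2 0 g.
Proof. by []. Qed.

Lemma S_ex r (p q1 q2 : nat -> 'I_r -> nat) k g :
  Sk p q1 q2 k g <-> exists k', (k' < k)%N /\ JG p q1 q2 k' g.
Proof.
elim: k => [|k IH]; first by split=> // -[k' []].
rewrite S_succ IH; split.
- case=> [[k' [lt H]]|H]; [exists k'; split=> //; exact: ltnW|by exists k].
- move=> [k' []]; rewrite ltnS leq_eqVlt => /orP [/eqP ->|lt] H; [by right|].
  by left; exists k'.
Qed.

Lemma S_mono r (p q1 q2 : nat -> 'I_r -> nat) k k' g :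
  (k <= k')%N -> Sk p q1 q2 k g -> Sk p q1 q2 k' g.
Proof.
move=> le /S_ex [k0 [lt H]]; apply/S_ex; exists k0; split=> //.
exact: leq_trans lt le.
Qed.

Lemma zfunext r (g h : Zr r) : (forall j, g j = h j) -> g = h.
Proof. exact: functional_extensionality. Qed.

Record Hyp r m (p q1 q2 : nat -> 'I_r -> nat) : Prop := {
  hr : (0 < r)%N;
  hm : (2 <= m)%N;
  hp : forall i j, (0 < i)%N ->
     [/\ (0 < p i j)%N, (p i j < p i.+1 j)%N, (p i j %| p i.+1 j)%N
       & (2 * i + 1 < p i j)%N];
  hq : forall i j, (0 < i)%N ->
     [/\ (i < q1 i j)%N, (i < q2 i j)%N & (q1 i j + q2 i j = p i j)%N];
  hfd : forall i, (0 < i)%N -> forall g : Zr r, exists d,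
     [/\ inD q1 q2 i d, inGamma p i (zsub g d)
       & forall d', inD q1 q2 i d' -> inGamma p i (zsub g d') -> d' = d];
  hcov : forall g : Zr r, exists i, (0 < i)%N /\ inD q1 q2 i g;
  hhier : forall i (h : Zr r), (2 <= i)%N ->
     (inD q1 q2 i h <->
      exists gam, [/\ inD q1 q2 i gam, inGamma p i.-1 gam
                    & inD q1 q2 i.-1 (zsub h gam)])
}.


Lemma p_dvd r m p q1 q2 (H : @Hyp r m p q1 q2) i k j :
  (0 < i)%N -> (i <= k)%N -> (p i j %| p k j)%N.
Proof.
move=> i0; elim: k => [|k IH]; first by rewrite leqn0 => /eqP i0'; rewrite i0' in i0.
rewrite leq_eqVlt => /orP [/eqP ->|]; first exact: dvdnn.
rewrite ltnS => le; apply: dvdn_trans (IH le) _.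
by case: (hp H j (leq_trans i0 le)).
Qed.

Lemma p_mono r m p q1 q2 (H : @Hyp r m p q1 q2) i k j :
  (0 < i)%N -> (i <= k)%N -> (p i j <= p k j)%N.
Proof.
move=> i0 le; apply: dvdn_leq; last exact: (p_dvd H j i0 le).
by case: (hp H j (leq_trans i0 le)).
Qed.

Lemma p_pos r m p q1 q2 (H : @Hyp r m p q1 q2) i j : (0 < i)%N -> (0 < p i j)%N.
Proof. by move=> i0; case: (hp H j i0). Qed.

Lemma G_sub r m p q1 q2 (H : @Hyp r m p q1 q2) i k g :
  (0 < i)%N -> (i <= k)%N -> inGamma p k g -> inGamma p i g.
Proof.
move=> i0 le Hg j; apply: dvdz_trans (Hg j).
by rewrite dvdzE /= (p_dvd H j i0 le).
Qed.

Lemma G_add r (p : nat -> 'I_r -> nat) i g h :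
  inGamma p i g -> inGamma p i h -> inGamma p i (zadd g h).
Proof. by move=> Hg Hh j; rewrite /zadd rpredD. Qed.
Lemma G_opp r (p : nat -> 'I_r -> nat) i g :
  inGamma p i g -> inGamma p i (zopp g).
Proof. by move=> Hg j; rewrite /zopp rpredN. Qed.
Lemma G_sub2 r (p : nat -> 'I_r -> nat) i g h :
  inGamma p i g -> inGamma p i h -> inGamma p i (zsub g h).
Proof. by move=> Hg Hh j; rewrite /zsub rpredB. Qed.
Lemma G_zero r (p : nat -> 'I_r -> nat) i : inGamma p i (zero r).
Proof. by move=> j; rewrite /zero dvdz0. Qed.
Lemma G_ext r (p : nat -> 'I_r -> nat) i g h :
  (forall j, g j = h j) -> inGamma p i g -> inGamma p i h.
Proof. by move=> E Hg j; rewrite -E. Qed.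

Local Open Scope ring_scope.
Lemma JG_inv r (p q1 q2 : nat -> 'I_r -> nat) k g γ :
  JG p q1 q2 k g -> inGamma p k.+1 γ -> JG p q1 q2 k (zadd g γ).
Proof.
move=> [h [Jh Gh]] Gγ; exists h; split=> //.
apply: (G_ext (g := zadd (zsub g h) γ)); first by move=> j; rewrite /zadd /zsub; lia.
exact: G_add.
Qed.

Lemma S_inv r m p q1 q2 (H : @Hyp r m p q1 q2) k g γ :
  (0 < k)%N -> Sk p q1 q2 k g -> inGamma p k γ -> Sk p q1 q2 k (zadd g γ).
Proof.
move=> k0 /S_ex [k' [lt Hg]] Gγ; apply/S_ex; exists k'; split=> //.
apply: JG_inv Hg _; exact: (G_sub H (ltn0Sn k') lt Gγ).
Qed.

Lemma JG_notS r m p q1 q2 (H : @Hyp r m p q1 q2) k g :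
  JG p q1 q2 k g -> ~ Sk p q1 q2 k g.
Proof.
case: k => [|k] Hg; first exact: S0.
move: (Hg) => [h [/J_succ [_ nSh] Gh]] Sg; apply: nSh.
have -> : h = zadd g (zopp (zsub g h)) by apply: zfunext => j; rewrite /zadd/zopp/zsub; lia.
apply: (S_inv H (ltn0Sn _) Sg); apply: G_opp; exact: (G_sub H (ltn0Sn _) (leqnSn _) Gh).
Qed.

Lemma JG_S r (p q1 q2 : nat -> 'I_r -> nat) k g :
  JG p q1 q2 k g -> Sk p q1 q2 k.+1 g.
Proof. by move=> Hg; apply/S_succ; right. Qed.

Lemma JG_unique r m p q1 q2 (H : @Hyp r m p q1 q2) k k' g :
  JG p q1 q2 k g -> JG p q1 q2 k' g -> k = k'.
Proof.
move=> H1 H2; case: (ltngtP k k') => // lt.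
- by case: (JG_notS H H2); apply/S_ex; exists k.
- by case: (JG_notS H H1); apply/S_ex; exists k'.
Qed.

Lemma JG_iff r m p q1 q2 (H : @Hyp r m p q1 q2) k g :
  JG p q1 q2 k g <-> Sk p q1 q2 k.+1 g /\ ~ Sk p q1 q2 k g.
Proof.
split; first by move=> Hg; split; [exact: JG_S|exact: (JG_notS H Hg)].
by move=> [/S_succ [] // ].
Qed.

Lemma JG_exists r m p q1 q2 (H : @Hyp r m p q1 q2) g : exists k, JG p q1 q2 k g.
Proof.
have [i [i0 Dg]] := hcov H g.
case: (classic (Sk p q1 q2 i g)) => [/S_ex [k [_ Hk]]|nS]; first by exists k.
exists i; exists g; split; last by apply: (G_ext (g := zero r)) (G_zero _ _) => j; rewrite /zsub /zero; lia.
by case: i i0 Dg nS => // i _ Dg nS; apply/J_succ.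
Qed.

Lemma eta_JG r m p q1 q2 (H : @Hyp r m p q1 q2) k g :
  JG p q1 q2 k g -> eta m p q1 q2 g = alpha m k.+1.
Proof.
move=> Hg; rewrite /eta.
set P := (fun k => _).
have := epsilon_spec (inhabits 0%N) P (JG_exists H g).
by move=> H2; rewrite (JG_unique H H2 Hg).
Qed.

Lemma eta_range r m (p q1 q2 : nat -> 'I_r -> nat) g :
  (0 < m)%N -> (1 <= eta m p q1 q2 g <= m)%N.
Proof. by move=> m0; rewrite /eta /alpha /= ltn_pmod. Qed.

Lemma alpha_neq m k : (2 <= m)%N -> alpha m k.+1 <> alpha m k.+2.
Proof.
move=> m2; rewrite /alpha /= => -[] E.
have : (k.+1 = k %[mod m])%N by rewrite E.
rewrite -addn1 -{2}[k]addn0 => /eqP; rewrite eqn_modDl modn_small ?mod0n //.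
Qed.

Definition rep r (p q1 : nat -> 'I_r -> nat) i (u : Zr r) : Zr r :=
  fun j => (((u j + (q1 i j)%:Z) %% (p i j)%:Z)%Z - (q1 i j)%:Z)%R.

Lemma rep_D r m p q1 q2 (H : @Hyp r m p q1 q2) i u :
  (0 < i)%N -> inD q1 q2 i (rep p q1 i u).
Proof.
move=> i0 j; rewrite /rep.
have [_ _ E] := hq H j i0.
have p0 := p_pos H j i0.
have pz : (p i j)%:Z != 0%R by lia.
have := intdiv.modz_ge0 (u j + (q1 i j)%:Z)%R pz.
have := intdiv.ltz_mod (u j + (q1 i j)%:Z)%R pz.
have -> : (`|(p i j)%:Z| = (p i j)%:Z)%R by lia.
lia.
Qed.

Lemma rep_G r m p q1 q2 (H : @Hyp r m p q1 q2) i u :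
  (0 < i)%N -> inGamma p i (zsub u (rep p q1 i u)).
Proof.
move=> i0 j; rewrite /rep /zsub.
have E := intdiv.divz_eq (u j + (q1 i j)%:Z)%R (p i j)%:Z.
set a := ((_ %/ _)%Z) in E; set b := ((_ %% _)%Z) in E *.
have -> : (u j - (b - (q1 i j)%:Z) = a * (p i j)%:Z)%R by lia.
exact: dvdz_mull (dvdzz _).
Qed.

Lemma D_uniq r m p q1 q2 (H : @Hyp r m p q1 q2) i d d' :
  (0 < i)%N -> inD q1 q2 i d -> inD q1 q2 i d' -> inGamma p i (zsub d d') -> d = d'.
Proof.
move=> i0 Dd Dd' G.
have [d0 [_ _ U]] := hfd H i0 d.
rewrite (U d' Dd' G) (U d Dd) //.
by apply: (G_ext (g := zero r)) (G_zero _ _) => j; rewrite /zsub /zero; lia.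
Qed.

Definition box r (o : Zr r) (M : nat) (u : Zr r) := forall j, (`|u j - o j| <= M%:Z)%R.

Lemma box_rep r m p q1 q2 (H : @Hyp r m p q1 q2) k M o z :
  (0 < k)%N -> (forall j, p k j <= M)%N -> exists v, box o M v /\ inGamma p k (zsub v z).
Proof.
move=> k0 hM.
exists (fun j => (o j + ((z j - o j) %% (p k j)%:Z)%Z)%R); split.
- move=> j.
  have p0 := p_pos H j k0.
  have pz : (p k j)%:Z != 0%R by lia.
  have := intdiv.modz_ge0 (z j - o j)%R pz.
  have := intdiv.ltz_mod (z j - o j)%R pz.
  have -> : (`|(p k j)%:Z| = (p k j)%:Z)%R by lia.
  have := hM j. lia.
- move=> j; rewrite /zsub.
  have E := intdiv.divz_eq (z j - o j)%R (p k j)%:Z.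
  set a := ((_ %/ _)%Z) in E; set b := ((_ %% _)%Z) in E *.
  have -> : (o j + b - z j = - a * (p k j)%:Z)%R by lia.
  exact: dvdz_mull (dvdzz _).
Qed.

Set Bullet Behavior "Strict Subproofs".

Ltac zgam e := apply: (G_ext (g := e)); [try (move=> j; rewrite /zadd /zsub /zopp; lia; fail) | idtac].
Ltac zfe := apply: zfunext => j; rewrite /zadd /zsub /zopp /zero; lia.

Definition ev r (j0 : 'I_r) (a : int) : Zr r := fun j => if j == j0 then a else 0.


Lemma lemV r m p q1 q2 (H : @Hyp r m p q1 q2) k h δ :
  J p q1 q2 k h -> (k = 0%N \/ inGamma p k δ) -> ~ inGamma p k.+1 δ ->
  J p q1 q2 k.+1 (rep p q1 k.+1 (zadd h δ)).
Proof.
move=> Jh Hδ nδ; set ρ := rep p q1 k.+1 (zadd h δ).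
have Gρ : inGamma p k.+1 (zsub (zadd h δ) ρ) := rep_G H _ (ltn0Sn _).
apply/J_succ; split; first exact: (rep_D H _ (ltn0Sn _)).
clearbody ρ; move/S_succ => [Sρ | [h' [Jh' Gh']]].
- case: k Jh Hδ nδ Gρ Sρ => [|k] Jh Hδ nδ Gρ Sρ; first exact: (S0 Sρ).
  move/J_succ: Jh => [_]; apply.
  have -> : h = zadd ρ (zadd (zsub (zadd h δ) ρ) (zopp δ)).
    by apply: zfunext => j; rewrite /zadd /zsub /zopp; lia.
  apply: (S_inv H (ltn0Sn _) Sρ); apply: G_add.
    exact: (G_sub H (ltn0Sn _) (leqnSn _) Gρ).
  by case: Hδ => // Hδ; apply: G_opp.
- case: k Jh Hδ nδ Gρ Jh' Gh' => [|k] Jh Hδ nδ Gρ Jh' Gh'.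
  + apply: nδ; move/J0: Jh => h0; move/J0: Jh' => h0'.
    zgam (zadd (zsub (zadd h δ) ρ) (zsub ρ h')); first by move=> j; rewrite /zadd /zsub h0 h0'; lia.
    exact: G_add.
  + move/J_succ: (Jh) => [Dh _]; move/J_succ: (Jh') => [Dh' _].
    have ehh : h = h'.
      apply: (D_uniq H (ltn0Sn _) Dh Dh').
      zgam (zadd (zsub (zadd h δ) ρ) (zadd (zsub ρ h') (zopp δ))).
      apply: G_add; first exact: (G_sub H (ltn0Sn _) (leqnSn _) Gρ).
      apply: G_add; first exact: (G_sub H (ltn0Sn _) (leqnSn _) Gh').
      by case: Hδ => // Hδ; apply: G_opp.
    apply: nδ; subst h'.
    zgam (zadd (zsub (zadd h δ) ρ) (zsub ρ h)).
    exact: G_add.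
Qed.

Lemma G_ev r m p q1 q2 (H : @Hyp r m p q1 q2) k j0 :
  (0 < k)%N -> inGamma p k (ev j0 (p k j0)%:Z).
Proof. by move=> k0 j; rewrite /ev; case: eqP => [->|_]; [exact: dvdzz|exact: dvdz0]. Qed.

Lemma nG_ev r m p q1 q2 (H : @Hyp r m p q1 q2) k j0 :
  (0 < k)%N -> ~ inGamma p k.+1 (ev j0 (p k j0)%:Z).
Proof.
move=> k0 /(_ j0); rewrite /ev eqxx dvdzE /= => /dvdn_leq.
have [p0 lt _ _] := hp H j0 k0.
by move=> /(_ p0); rewrite leqNgt lt.
Qed.

Lemma nG_ev1 r m p q1 q2 (H : @Hyp r m p q1 q2) j0 :
  ~ inGamma p 1%N (ev j0 1).
Proof.
move=> /(_ j0); rewrite /ev eqxx dvdzE /= dvdn1 => /eqP E.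
have [_ _ _] := hp H j0 (ltn0Sn 0); rewrite E //.
Qed.

Lemma J_nonempty r m p q1 q2 (H : @Hyp r m p q1 q2) k : exists h, J p q1 q2 k h.
Proof.
have j0 : 'I_r := Ordinal (hr H).
elim: k => [|k [h Jh]]; first by exists (zero r) => j.
case: k Jh => [|k] Jh.
- exists (rep p q1 1%N (zadd h (ev j0 1))); apply: (lemV H Jh (or_introl erefl)).
  exact: (nG_ev1 (j0:=j0) H).
- exists (rep p q1 k.+2 (zadd h (ev j0 (p k.+1 j0)%:Z))); apply: (lemV H Jh).
    by right; apply: (G_ev H j0 (ltn0Sn _)).
  exact: (nG_ev (j0:=j0) H (ltn0Sn _)).
Qed.

Lemma find_k r (p : nat -> 'I_r -> nat) I δ :
  (0 < I)%N -> ~ inGamma p I δ ->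
  exists k, [/\ (k < I)%N, (k = 0%N \/ inGamma p k δ) & ~ inGamma p k.+1 δ].
Proof.
elim: I => // I IH _ nG.
case: I IH nG => [|I] IH nG; first by exists 0%N; split=> //; left.
case: (classic (inGamma p I.+1 δ)) => G.
  by exists I.+1; split=> //; right.
have [k [lt H1 H2]] := IH (ltn0Sn _) G.
by exists k; split=> //; apply: ltnW.
Qed.

Lemma J_of r (p q1 q2 : nat -> 'I_r -> nat) I h :
  (0 < I)%N -> inD q1 q2 I h -> ~ Sk p q1 q2 I h -> J p q1 q2 I h.
Proof. by case: I => // I _ D nS; apply/J_succ. Qed.

Lemma lemV2 r m p q1 q2 (H : @Hyp r m p q1 q2) I u M o :
  (0 < I)%N -> ~ Sk p q1 q2 I u -> (forall j, p I.+2 j <= M)%N ->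
  exists v1 v2, [/\ box o M v1, box o M v2, inGamma p I (zsub v1 u),
                    inGamma p I (zsub v2 u) & eta m p q1 q2 v1 <> eta m p q1 q2 v2].
Proof.
move=> I0 nS hM.
have j0 : 'I_r := Ordinal (hr H).
set h := rep p q1 I u.
have Gu : inGamma p I (zsub u h) := rep_G H _ I0.
have nSh : ~ Sk p q1 q2 I h.
  move=> Sh; apply: nS.
  have -> : u = zadd h (zsub u h) by apply: zfunext => j; rewrite /zadd /zsub; lia.
  exact: (S_inv H I0 Sh Gu).
have Jh : J p q1 q2 I h := J_of I0 (rep_D H u I0) nSh.
set δ := ev j0 (p I j0)%:Z.
have Gδ : inGamma p I δ := G_ev H j0 I0.
have Jj : J p q1 q2 I.+1 (rep p q1 I.+1 (zadd h δ)).
  apply: (lemV H Jh (or_intror Gδ)); exact: (nG_ev (j0:=j0) H I0).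
set j' := rep p q1 I.+1 (zadd h δ) in Jj.
have Gj : inGamma p I.+1 (zsub (zadd h δ) j') := rep_G H _ (ltn0Sn _).
have [v1 [B1 G1]] := box_rep H o h (ltn0Sn I.+1) hM.
have [v2 [B2 G2]] := box_rep H o j' (ltn0Sn I.+1) hM.
have lI : (I <= I.+2)%N by apply: leqW.
exists v1, v2; split=> //.
- zgam (zsub (zsub v1 h) (zsub u h)).
  apply: G_sub2 => //; exact: (G_sub H I0 lI G1).
- zgam (zadd (zsub (zsub v2 j') (zsub (zadd h δ) j')) (zsub δ (zsub u h))).
  apply: G_add; apply: G_sub2 => //.
    exact: (G_sub H I0 lI G2).
  exact: (G_sub H I0 (leqnSn _) Gj).
- rewrite (eta_JG (k := I) H); last first.
    exists h; split=> //; exact: (G_sub H (ltn0Sn _) (leqnSn _) G1).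
  rewrite (eta_JG (k := I.+1) H); last by exists j'.
  exact: (alpha_neq (k:=I) (hm H)).
Qed.

Lemma lemR r m p q1 q2 (H : @Hyp r m p q1 q2) I M o δ :
  (0 < I)%N -> (forall j, p I.+1 j <= M)%N ->
  (forall u, box o M u -> Sk p q1 q2 I u -> eta m p q1 q2 (zadd u δ) = eta m p q1 q2 u) ->
  inGamma p I δ.
Proof.
move=> I0 hM E; apply: NNPP => nG.
have [k [lt Hk nk]] := find_k I0 nG.
have [h Jh] := J_nonempty H k.
have Jj := lemV H Jh Hk nk.
set j' := rep p q1 k.+1 (zadd h δ) in Jj.
have Gj : inGamma p k.+1 (zsub (zadd h δ) j') := rep_G H _ (ltn0Sn _).
have hM' : (forall j, p k.+2 j <= M)%N.
  by move=> j; apply: leq_trans (hM j); apply: (p_mono H j (ltn0Sn _)).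
have [u [Bu Gu]] := box_rep H o (zsub j' δ) (ltn0Sn k.+1) hM'.
have JGu : JG p q1 q2 k u.
  exists h; split=> //.
  zgam (zsub (zsub u (zsub j' δ)) (zsub (zadd h δ) j')).
  apply: G_sub2 => //; exact: (G_sub H (ltn0Sn _) (leqnSn _) Gu).
have Su : Sk p q1 q2 I u by apply/S_ex; exists k.
have JGu' : JG p q1 q2 k.+1 (zadd u δ).
  exists j'; split=> //.
  by zgam (zsub u (zsub j' δ)).
have := E u Bu Su.
rewrite (eta_JG H JGu) (eta_JG H JGu').
by move=> e; apply: (alpha_neq (k:=k) (hm H)); rewrite e.
Qed.
Lemma J_notS r (p q1 q2 : nat -> 'I_r -> nat) I h :
  (0 < I)%N -> J p q1 q2 I h -> ~ Sk p q1 q2 I h.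
Proof. by case: I => // I _ /J_succ []. Qed.

Lemma J_D r (p q1 q2 : nat -> 'I_r -> nat) I h :
  (0 < I)%N -> J p q1 q2 I h -> inD q1 q2 I h.
Proof. by case: I => // I _ /J_succ []. Qed.

Lemma Dtile r m p q1 q2 (H : @Hyp r m p q1 q2) I h h' d : forall γ,
  (0 < I)%N -> inD q1 q2 I h -> inD q1 q2 I h' -> inGamma p I γ ->
  inD q1 q2 (I + d) (zadd h γ) -> inD q1 q2 (I + d) (zadd h' γ).
Proof.
elim: d => [|d IH] γ I0 Dh Dh' Gγ.
- rewrite addn0 => D.
  have E : zadd h γ = h.
    by apply: (D_uniq H I0 D Dh); zgam γ.
  have -> : zadd h' γ = h'.
    apply: zfunext => j; have := congr1 (fun F => F j) E; rewrite /zadd; lia.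
  done.
- rewrite addnS => D.
  have i2 : (2 <= (I + d).+1)%N by rewrite ltnS; apply: leq_trans I0 (leq_addr _ _).
  move/(hhier H _ i2): D => [gam [Dg Gg Dz]].
  apply/(hhier H _ i2); exists gam; split=> //.
  move: Dz; rewrite /= => Dz.
  have E1 : zsub (zadd h γ) gam = zadd h (zsub γ gam) by zfe.
  have E2 : zsub (zadd h' γ) gam = zadd h' (zsub γ gam) by zfe.
  rewrite E2; rewrite E1 in Dz; apply: (IH _ I0 Dh Dh') => //.
  apply: G_sub2 => //; exact: (G_sub H I0 (leq_addr _ _) Gg).
Qed.

Lemma lemQ r m p q1 q2 (H : @Hyp r m p q1 q2) I k : forall h h' γ,
  (0 < I)%N -> J p q1 q2 I h -> J p q1 q2 I h' -> inGamma p I γ ->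
  Sk p q1 q2 k (zadd h γ) -> Sk p q1 q2 k (zadd h' γ).
Proof.
elim: k => [|k IH] h h' γ I0 Jh Jh' Gγ; first by move/S0.
move/S_succ => [S1|[h'' [Jh'' Ghh]]]; apply/S_succ; first by left; exact: (IH h h' γ I0 Jh Jh' Gγ S1).
right.
have kI : (I <= k)%N.
  case: (ltnP k I) => // kI.
  exfalso; apply: (J_notS I0 Jh).
  have -> : h = zadd (zadd h γ) (zopp γ) by zfe.
  apply: (S_inv H I0) ; last exact: (G_opp Gγ).
  by apply/S_ex; exists k; split=> //; exists h''.
have k0 : (0 < k)%N := leq_trans I0 kI.
have Dh'' := J_D k0 Jh''.
have nSh'' := J_notS k0 Jh''.
have Gr := rep_G H h'' I0.
have nSr : ~ Sk p q1 q2 I (rep p q1 I h'').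
  move=> Sr; apply: nSh''; apply: (S_mono kI).
  have -> : h'' = zadd (rep p q1 I h'') (zsub h'' (rep p q1 I h'')) by zfe.
  exact: (S_inv H I0 Sr Gr).
have Eh : h = rep p q1 I h''.
  apply: (D_uniq H I0 (J_D I0 Jh) (rep_D H h'' I0)).
  zgam (zadd (zsub (zadd h γ) h'') (zsub (zsub h'' (rep p q1 I h'')) γ)).
  apply: G_add; last exact: G_sub2.
  exact: (G_sub H I0 (leqW kI) Ghh).
rewrite -Eh in Gr.
have E'' : h'' = zadd h (zsub h'' h) by zfe.
have Dk : (k = I + (k - I))%N by rewrite subnKC.
exists (zadd h' (zsub h'' h)); split.
- apply: (J_of k0).
  + rewrite Dk; apply: (Dtile H I0 (J_D I0 Jh) (J_D I0 Jh') Gr).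
    by rewrite -Dk -E''.
  + move=> S'; apply: nSh''; rewrite E''.
    exact: (IH h' h _ I0 Jh' Jh Gr S').
- zgam (zsub (zadd h γ) h'').
  exact: Ghh.
Qed.

Lemma eta_tile r m p q1 q2 (H : @Hyp r m p q1 q2) I h h' γ :
  (0 < I)%N -> J p q1 q2 I h -> J p q1 q2 I h' -> inGamma p I γ ->
  eta m p q1 q2 (zadd h γ) = eta m p q1 q2 (zadd h' γ).
Proof.
move=> I0 Jh Jh' Gγ.
have [k0 Hk] := JG_exists H (zadd h γ).
move/(JG_iff H): (Hk) => [S1 nS].
have Hk' : JG p q1 q2 k0 (zadd h' γ).
  apply/(JG_iff H); split; first exact: (lemQ H I0 Jh Jh' Gγ S1).
  by move=> S2; apply: nS; exact: (lemQ H I0 Jh' Jh Gγ S2).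
by rewrite (eta_JG H Hk) (eta_JG H Hk').
Qed.

Lemma eta_per r m p q1 q2 (H : @Hyp r m p q1 q2) I u γ :
  (0 < I)%N -> Sk p q1 q2 I u -> inGamma p I γ ->
  eta m p q1 q2 (zadd u γ) = eta m p q1 q2 u.
Proof.
move=> I0 /S_ex [k [lt Hk]] Gγ.
have Hk' := JG_inv Hk (G_sub H (ltn0Sn _) lt Gγ).
by rewrite (eta_JG H Hk) (eta_JG H Hk').
Qed.

Definition nrm r (w : Zr r) : nat := (\max_(j < r) `|w j|%N)%N.

Lemma nrm_ge r (w : Zr r) j : `|w j| <= (nrm w)%:Z.
Proof.
have := @leq_bigmax _ (fun j => `|w j|%N) j; rewrite /nrm => le.
rewrite -abszE lez_nat; exact: le.
Qed.

Lemma choose_fun (A B : Type) (b0 : B) (P : A -> B -> Prop) :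
  (forall a, exists b, P a b) -> exists f, forall a, P a (f a).
Proof.
move=> Hex; exists (fun a => epsilon (inhabits b0) (P a)) => a.
exact: (epsilon_spec (inhabits b0) (P a) (Hex a)).
Qed.

Lemma inX_shift r m (p q1 q2 : nat -> 'I_r -> nat) x t :
  inX m p q1 q2 x -> inX m p q1 q2 (shift t x).
Proof.
move=> Hx n; have [g Hg] := Hx (n + nrm t)%N.
exists (zadd t g) => h hn; rewrite /shift.
rewrite Hg; last first.
  move=> j; have := hn j; have := nrm_ge t j; rewrite /zsub; lia.
rewrite /shift; congr eta; zfe.
Qed.

Lemma lemC1 r m p q1 q2 (H : @Hyp r m p q1 q2) I t y u :
  (0 < I)%N -> inC m p q1 q2 I (shift t y) -> Sk p q1 q2 I u ->
  y (zsub u t) = eta m p q1 q2 u.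
Proof.
move=> I0 [_ Hper] Su.
have m0 : (0 < m)%N by apply: leq_trans (hm H).
have Pe : Per p (eta m p q1 q2) I (eta m p q1 q2 u) u.
  move=> γ Gγ; have -> : zsub u γ = zadd u (zopp γ) by zfe.
  apply: (eta_per H I0 Su); exact: G_opp.
have := (proj2 (Hper _ (eta_range p q1 q2 u m0) u) Pe) (zero r) (G_zero _ _).
rewrite /shift; have -> : zsub u (zero r) = u by zfe.
done.
Qed.
Lemma existsC r m p q1 q2 (H : @Hyp r m p q1 q2) I y :
  (0 < I)%N -> inX m p q1 q2 y -> exists t, inC m p q1 q2 I (shift t y).
Proof.
move=> I0 Hy.
have [gf Hg] := choose_fun (zero r) Hy.
set N0 := (\max_(j < r) p I.+2 j)%N.
have hN2 : forall j, (p I.+2 j <= N0)%N by move=> j; exact: (@leq_bigmax _ (fun j => p I.+2 j) j).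
have hN1 : forall j, (p I.+1 j <= N0)%N.
  by move=> j; apply: leq_trans (hN2 j); apply: (p_mono H j (ltn0Sn _)).
set c := gf N0.
have cong : forall n, (N0 <= n)%N -> inGamma p I (zsub (gf n) c).
  move=> n le.
  apply: (lemR H (o := zopp (gf n)) I0 hN1) => u Bu Su.
  have Bw : forall j, `|zadd u (gf n) j| <= N0%:Z.
    by move=> j; have := Bu j; rewrite /zadd /zopp; lia.
  have Bw' : forall j, `|zadd u (gf n) j| <= n%:Z.
    by move=> j; have := Bw j; lia.
  have e1 := Hg N0 _ Bw.
  have e2 := Hg n _ Bw'.
  move: e1 e2; rewrite /shift => ->.
  have -> : zsub (zadd u (gf n)) (gf n) = u by zfe.
  have -> : zsub (zadd u (gf n)) c = zadd u (zsub (gf n) c) by zfe.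
  done.
exists (zopp c); split; first exact: inX_shift.
move=> a ha g; split.
- move=> Hp γ0 Gγ0.
  case: (classic (Sk p q1 q2 I (zsub g γ0))) => Su.
  + have := Hp (zero r) (G_zero _ _); rewrite /shift.
    set w := zsub (zsub g (zero r)) (zopp c).
    set n := maxn N0 (nrm w).
    have Bw : forall j, `|w j| <= n%:Z.
      by move=> j; have := nrm_ge w j; rewrite /n; lia.
    rewrite (Hg n _ Bw) /shift => <-.
    have -> : zsub w (gf n) = zadd (zsub g γ0) (zadd γ0 (zopp (zsub (gf n) c))).
      by rewrite /w; zfe.
    rewrite (eta_per H I0 Su) //.
    apply: G_add => //; apply: G_opp; apply: cong; exact: leq_maxl.
  + have [v1 [v2 [B1 B2 G1 G2 ne]]] := lemV2 H (zopp c) I0 Su hN2.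
    exfalso; apply: ne.
    have key : forall v, box (zopp c) N0 v -> inGamma p I (zsub v (zsub g γ0)) ->
        eta m p q1 q2 v = a.
      move=> v Bv Gv.
      have Gv' : inGamma p I (zsub g v).
        zgam (zsub γ0 (zsub v (zsub g γ0))); exact: G_sub2.
      have := Hp _ Gv'; rewrite /shift.
      have -> : zsub (zsub g (zsub g v)) (zopp c) = zadd v c by zfe.
      have Bw : forall j, `|zadd v c j| <= N0%:Z.
        by move=> j; have := Bv j; rewrite /zadd /zopp; lia.
      rewrite (Hg N0 _ Bw) /shift => <-.
      rewrite -/c; congr eta; zfe.
    by rewrite (key _ B1 G1) (key _ B2 G2).
- move=> Hp γ Gγ; rewrite /shift.
  set w := zsub (zsub g γ) (zopp c).
  set n := maxn N0 (nrm w).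
  have Bw : forall j, `|w j| <= n%:Z.
    by move=> j; have := nrm_ge w j; rewrite /n; lia.
  rewrite (Hg n _ Bw) /shift.
  have -> : zsub w (gf n) = zsub g (zadd γ (zsub (gf n) c)) by rewrite /w; zfe.
  apply: Hp; apply: G_add => //; apply: cong; exact: leq_maxl.
Qed.
Lemma eta_lt r m (p q1 q2 : nat -> 'I_r -> nat) g :
  (0 < m)%N -> ((eta m p q1 q2 g).-1 < m)%N.
Proof. by move=> m0; have := eta_range p q1 q2 g m0; case: (eta _ _ _ _ g) => // e /andP [_]. Qed.

Lemma divz_two (x x0 p N : int) : (0 < p)%R -> (x0 <= x)%R -> (x <= x0 + 2*N)%R -> (2*N < p)%R ->
  ((x %/ p)%Z = (x0 %/ p)%Z) \/ ((x %/ p)%Z = (x0 %/ p)%Z + 1)%R.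
Proof. move=> hp *.
have p0 : p != 0 by lia.
have := intdiv.divz_eq x p; have := intdiv.divz_eq x0 p.
have := intdiv.modz_ge0 x p0; have := intdiv.modz_ge0 x0 p0.
have := intdiv.ltz_mod x p0; have := intdiv.ltz_mod x0 p0.
have -> : (`|p| = p)%R by lia.
set a := (x %/ p)%Z; set b := (x0 %/ p)%Z; set c := (x %% p)%Z; set d := (x0 %% p)%Z.
move=> *. nia. Qed.

Lemma main_count r m p q1 q2 (H : @Hyp r m p q1 q2) x (n : nat) (f : 'I_n -> Config r) :
  inX m p q1 q2 x -> injective f ->
  (forall k, inX m p q1 q2 (f k) /\
             forall i, (0 < i)%N -> piX m p q1 q2 (f k) i = piX m p q1 q2 x i) ->
  (n <= m ^ (2 ^ r))%N.
Proof.
move=> Hx finj Hf.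
have m0 : (0 < m)%N by apply: leq_trans (hm H).
have [N sep] : exists N : nat, forall k k', k != k' ->
    exists w : Zr r, (forall j, `|w j| <= N%:Z) /\ f k w <> f k' w.
  have : forall kk : 'I_n * 'I_n, exists N0 : nat, kk.1 != kk.2 ->
      exists w : Zr r, (forall j, `|w j| <= N0%:Z) /\ f kk.1 w <> f kk.2 w.
    move=> [k k'] /=; case: (eqVneq k k') => [->|ne]; first by exists 0%N => /eqP.
    have nf : f k <> f k' by move/finj => e; move: ne; rewrite e eqxx.
    have [w hw] : exists w, f k w <> f k' w.
      apply: NNPP => nex; apply: nf; apply: functional_extensionality => w.
      by apply: NNPP => hne; apply: nex; exists w.
    by exists (nrm w) => _; exists w; split=> //; exact: nrm_ge.
  move/(choose_fun 0%N) => [Nf HN].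
  exists (\max_(kk : 'I_n * 'I_n) Nf kk)%N => k k' ne.
  have [w [Bw hw]] := HN (k, k') ne.
  exists w; split=> // j; apply: (Order.le_trans (Bw j)); exact: (@leq_bigmax _ Nf (k, k')).
set I := N.+1.
have I0 : (0 < I)%N by [].
have hpI : forall j, (2 * N + 1 < p I j)%N.
  by move=> j; have [_ _ _ lt] := hp H j I0; rewrite /I in lt *; lia.
set tf := fun k => epsilon (inhabits (zero r)) (fun t => inC m p q1 q2 I (shift t (f k))).
have Ct : forall k, inC m p q1 q2 I (shift (tf k) (f k)).
  by move=> k; exact: (epsilon_spec _ _ (existsC H I0 (Hf k).1)).
set tx := epsilon (inhabits (zero r)) (fun t => inC m p q1 q2 I (shift t x)).
have hcong : forall k, inGamma p I (zsub (tf k) tx).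
  move=> k j; have := congr1 (fun F => F j) ((Hf k).2 I I0).
  rewrite /piX /= => E; rewrite /zsub -eqz_mod_dvd; apply/eqP; exact: E.
set M := (N + \max_(j < r) p I.+1 j)%N.
have hM1 : forall j, (p I.+1 j <= M)%N.
  move=> j; rewrite /M; apply: (leq_trans _ (leq_addl N _)); exact: (@leq_bigmax _ (fun j => p I.+1 j) j).
have [gk Hgk] := choose_fun (zero r) (fun k => (Hf k).1 M).
have hδ : forall k, inGamma p I (zsub (zopp (tf k)) (gk k)).
  move=> k; apply: (lemR H (o := tf k) I0 hM1) => u Bu Su.
  have e1 := lemC1 H I0 (Ct k) Su.
  have Bw : forall j, `|zsub u (tf k) j| <= M%:Z by move=> j; have := Bu j; rewrite /zsub.
  rewrite -e1 (Hgk k _ Bw) /shift; congr eta; zfe.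
set c := zopp tx.
set γk := fun k => zsub (gk k) c.
have Gγ : forall k, inGamma p I (γk k).
  move=> k; rewrite /γk /c.
  zgam (zopp (zadd (zsub (zopp (tf k)) (gk k)) (zsub (tf k) tx))).
  by apply: G_opp; apply: G_add.
set A := fun j => ((- N%:Z - c j + (q1 I j)%:Z) %/ (p I j)%:Z)%Z.
set tau := fun (b : {ffun 'I_r -> bool}) => (fun j => ((A j + (b j : nat)%:Z) * (p I j)%:Z)%R) : Zr r.
set bw := fun (w : Zr r) => [ffun j => ((w j - c j + (q1 I j)%:Z) %/ (p I j)%:Z)%Z != A j].
have tauE : forall w, (forall j, `|w j| <= N%:Z) ->
    zsub (zsub w c) (rep p q1 I (zsub w c)) = tau (bw w).
{ move=> w Bw; apply: zfunext => j; rewrite /zsub /rep /tau /bw ffunE.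
  have pp := p_pos H j I0.
  have := hpI j => hpj.
  have E := intdiv.divz_eq (w j - c j + (q1 I j)%:Z)%R (p I j)%:Z.
  have [e|e] := divz_two (x := (w j - c j + (q1 I j)%:Z)%R) (x0 := (- N%:Z - c j + (q1 I j)%:Z)%R)
     (p := (p I j)%:Z) (N := N%:Z) ltac:(lia) ltac:(have := Bw j; lia) ltac:(have := Bw j; lia) ltac:(lia).
  - rewrite -/(A j) in e; rewrite e eqxx /=; rewrite e in E; lia.
  - rewrite -/(A j) in e; rewrite e.
    have -> : (A j + 1 != A j) = true by apply/negP => /eqP; lia.
    rewrite e in E; lia. }
set j0 := epsilon (inhabits (zero r)) (J p q1 q2 I).
have fw : forall k k' w, (forall j, `|w j| <= N%:Z) ->
    (forall b, eta m p q1 q2 (zadd j0 (zsub (tau b) (γk k))) =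
               eta m p q1 q2 (zadd j0 (zsub (tau b) (γk k')))) ->
    f k w = f k' w.
{ move=> k k' w Bw Eb.
  have BwM : forall j, `|w j| <= M%:Z by move=> j; have := Bw j; rewrite /M; lia.
  set ρ := rep p q1 I (zsub w c).
  have Gτ : inGamma p I (zsub (zsub w c) ρ) := rep_G H _ I0.
  have Ew : forall kk, f kk w = eta m p q1 q2 (zadd ρ (zsub (zsub (zsub w c) ρ) (γk kk))).
    move=> kk; rewrite (Hgk kk _ BwM) /shift; congr eta; rewrite /γk; zfe.
  have GX : forall kk, inGamma p I (zsub (zsub (zsub w c) ρ) (γk kk)).
    by move=> kk; apply: G_sub2.
  rewrite !Ew.
  case: (classic (Sk p q1 q2 I ρ)) => Sρ.
  - by rewrite !(eta_per H I0 Sρ).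
  - have Jρ : J p q1 q2 I ρ := J_of I0 (rep_D H _ I0) Sρ.
    have Jj0 : J p q1 q2 I j0 := epsilon_spec _ _ (ex_intro _ ρ Jρ).
    rewrite (eta_tile H I0 Jρ Jj0 (GX k)) (eta_tile H I0 Jρ Jj0 (GX k')).
    by rewrite /ρ tauE. }
set code := fun k => [ffun b : {ffun 'I_r -> bool} =>
   Ordinal (eta_lt p q1 q2 (zadd j0 (zsub (tau b) (γk k))) m0)].
have code_inj : injective code.
  move=> k k' E; case: (eqVneq k k') => // ne; exfalso.
  have [w [Bw hw]] := sep k k' ne; apply: hw; apply: (fw _ _ _ Bw) => b.
  have e := congr1 (fun F : {ffun {ffun 'I_r -> bool} -> 'I_m} => val (F b)) E.
  move: e; rewrite /code !ffunE => e.
  have e' : (eta m p q1 q2 (zadd j0 (zsub (tau b) (γk k)))).-1 =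
            (eta m p q1 q2 (zadd j0 (zsub (tau b) (γk k')))).-1 := e.
  have := eta_range p q1 q2 (zadd j0 (zsub (tau b) (γk k))) m0.
  have := eta_range p q1 q2 (zadd j0 (zsub (tau b) (γk k'))) m0.
  move: e'; set e1 := eta _ _ _ _ _; set e2 := eta _ _ _ _ _.
  lia.
have := leq_card code code_inj.
by rewrite card_ord card_ffun card_ord card_ffun card_bool card_ord.
Qed.

Local Close Scope ring_scope.

Theorem proposition4p8 (r m : nat) (p q1 q2 : nat -> 'I_r -> nat) :
  (2 <= r)%N -> (2 <= m)%N ->
  (* p_j^i : strictly increasing positive, dividing chain, p_j^i > 2i+1 *)
  (forall i j, (0 < i)%N ->
     [/\ (0 < p i j)%N, (p i j < p i.+1 j)%N, (p i j %| p i.+1 j)%N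
       & (2 * i + 1 < p i j)%N]) ->
  (forall i, (0 < i)%N -> index_cond p i) ->
  (* D_i is the box given by q1, q2 *)
  (forall i j, (0 < i)%N ->
     [/\ (i < q1 i j)%N, (i < q2 i j)%N & (q1 i j + q2 i j = p i j)%N]) ->
  (* D_i is a fundamental domain of Z^r / Gamma_i *)
  (forall i, (0 < i)%N -> forall g : Zr r, exists d,
     [/\ inD q1 q2 i d, inGamma p i (zsub g d)
       & forall d', inD q1 q2 i d' -> inGamma p i (zsub g d') -> d' = d]) ->
  (forall i, (0 < i)%N -> inD q1 q2 i (zero r)) ->
  (forall i h, (0 < i)%N -> inD q1 q2 i h -> inD q1 q2 i.+1 h) ->
  (forall g : Zr r, exists i, (0 < i)%N /\ inD q1 q2 i g) ->
  (forall i (h : Zr r), (2 <= i)%N ->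
     (inD q1 q2 i h <->
      exists gam, [/\ inD q1 q2 i gam, inGamma p i.-1 gam
                    & inD q1 q2 i.-1 (zsub h gam)])) ->
  forall x : Config r, inX m p q1 q2 x ->
  forall (n : nat) (f : 'I_n -> Config r), injective f ->
  (forall k, inX m p q1 q2 (f k) /\
             forall i, (0 < i)%N -> piX m p q1 q2 (f k) i = piX m p q1 q2 x i) ->
  (n <= m ^ (2 ^ r))%N.
Proof.
move=> r2 m2 hp1 hidx hq1 hfd1 hz hn hcov1 hhier1 x Hx n f finj Hf.
exact: (main_count (Build_Hyp (ltnW r2) m2 hp1 hq1 hfd1 hcov1 hhier1) Hx finj Hf).
Qed.
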